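(* Let $G$ be a graph of order $n$ with minimum degree $\delta$ and let $\mu=\mu(G)$. If $(x_1,\ldots,x_n)$ is a unit eigenvector of the adjacency matrix of $G$ for the eigenvalue $\mu$, then \[ \min\{x_1,\ldots,x_n\}\leq\sqrt{\frac{\delta}{\mu^2+\delta n-\delta^2}}. \]
   Context: All graphs are finite and simple; $\mu(G)$ denotes the largest eigenvalue of the adjacency matrix of $G$; vertices of $G$ are identified with $1,\ldots,n$ and the eigenvector is indexed by vertices. *)

(* Defs.v *)
From HB Require Import structures.
From mathcomp Require Import all_boot all_order all_algebra.
From mathcomp Require Import reals.
Set Implicit Arguments. Unset Strict Implicit. Unset Printing Implicit Defensive.
Import Order.TTheory GRing.Theory Num.Theory.
Local Open Scope ring_scope.

Definition simple_graph (n : nat) (e : rel 'I_n) : Prop :=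
  irreflexive e /\ symmetric e.

Definition deg (n : nat) (e : rel 'I_n) (i : 'I_n) : nat := #|[set j | e i j]|.

(* Minimum degree (default value n is irrelevant for n >= 1, since degrees < n). *)
Definition mindeg (n : nat) (e : rel 'I_n) : nat :=
  \big[minn/n]_(i : 'I_n) deg e i.

Definition adjmx (R : nzRingType) (n : nat) (e : rel 'I_n) : 'M[R]_n :=
  \matrix_(i, j) (e i j)%:R.

Definition is_largest_eig (R : realType) (n : nat) (e : rel 'I_n) (mu : R) : Prop :=
  eigenvalue (adjmx R e) mu /\ (forall a : R, eigenvalue (adjmx R e) a -> a <= mu).

(* Main.v *)
Require Import Defs.
From HB Require Import structures.
From mathcomp Require Import all_boot all_order all_algebra.
From mathcomp Require Import reals.
From mathcomp Require Import ring lra.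
Import Order.TTheory GRing.Theory Num.Theory.
Local Open Scope ring_scope.

Lemma cs_sum (R : realFieldType) (I : finType) (P : pred I) (a : I -> R) :
  (\sum_(i | P i) a i) ^+ 2 <= (#|P|)%:R * \sum_(i | P i) a i ^+ 2.
Proof.
set S := \sum_(i | P i) a i; set d : R := (#|P|)%:R.
have H0 : 0 <= \sum_(i | P i) (d * a i - S) ^+ 2 by apply: sumr_ge0 => i _; exact: sqr_ge0.
have E : \sum_(i | P i) (d * a i - S) ^+ 2 =
   d * (d * \sum_(i | P i) a i ^+ 2 - S ^+ 2).
  rewrite (eq_bigr (fun i => d ^+ 2 * a i ^+ 2 - (2 * d * S) * a i + S ^+ 2));
    last by move=> i _; rewrite sqrrB exprMn; ring.
  rewrite big_split /= sumrB -!mulr_sumr sumr_const -/S /d.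
  rewrite -mulr_natr; ring.
case: (posnP #|P|) => HP.
  have -> : S = 0 by rewrite /S big_pred0 // => i; have := card0_eq HP i.
  by rewrite expr0n /d HP mul0r.
rewrite E in H0; rewrite -subr_ge0.
by rewrite pmulr_rge0 in H0 => //; rewrite ltr0n.
Qed.

Lemma mindeg_le (n : nat) (e : rel 'I_n) (i : 'I_n) : (mindeg e <= deg e i)%N.
Proof.
rewrite /mindeg.
have : i \in index_enum 'I_n by rewrite mem_index_enum.
elim: (index_enum 'I_n) => // a r IH; rewrite inE big_cons.
case/orP => [/eqP <-|/IH H]; first exact: geq_minl.
exact: leq_trans (geq_minr _ _) H.
Qed.

Lemma mindeg_ex (n : nat) (e : rel 'I_n) : (0 < n)%N -> exists u, mindeg e = deg e u.
Proof.
move=> n0.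
have : mindeg e = n \/ exists u, mindeg e = deg e u.
  rewrite /mindeg; apply: (big_ind (fun x => x = n \/ exists u, x = deg e u)).
  - by left.
  - by move=> a b Ha Hb; case: (leqP a b).
  - by move=> i _; right; exists i.
case=> // H; exists (Ordinal n0); apply/eqP; rewrite eqn_leq mindeg_le H.
by rewrite /deg -[X in (_ <= X)%N]card_ord max_card.
Qed.
Theorem lemma1 (R : realType) (n : nat) (e : rel 'I_n) (mu : R) (x : 'cV[R]_n) :
  simple_graph e ->
  is_largest_eig e mu ->
  (* the right-hand side is well defined (excludes the edgeless graph, where it is 0/0) *)
  0 < mu ^+ 2 + (mindeg e)%:R * n%:R - (mindeg e)%:R ^+ 2 ->
  adjmx R e *m x = mu *: x ->
  \sum_(i < n) x i 0 ^+ 2 = 1 ->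
  exists i : 'I_n,
    x i 0 <= Num.sqrt ((mindeg e)%:R / (mu ^+ 2 + (mindeg e)%:R * n%:R - (mindeg e)%:R ^+ 2)).
Proof.
case: n e x => [|n] e x [irr sym] _ HD Hx Hs.
  by move: Hs; rewrite big_ord0 => /eqP; rewrite eq_sym oner_eq0.
set d := mindeg e.
set a := fun i : 'I_n.+1 => (x i 0 : R).
have [u du] := @mindeg_ex _ e (ltn0Sn n).
case: (arg_minP a (i0 := ord0) (P:=xpredT) isT) => m0 _ Hm.
exists m0; rewrite -/(a m0).
set m := a m0.
case: (lerP m 0) => hm; first exact: le_trans hm (sqrtr_ge0 _).
have E1 : mu * a u = \sum_(v | e u v) a v.
  have := congr1 (fun M : 'M[R]_(n.+1,1) => M u 0) Hx; rewrite /adjmx !mxE /= => <-.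
  rewrite [RHS]big_mkcond /=; apply: eq_bigr => j _; rewrite !mxE /a.
  by case: (e u j); rewrite ?mul1r ?mul0r.
have cd : #|e u| = d by rewrite /d du /deg cardsE.
have CS := @cs_sum _ _ (e u) a; rewrite cd -E1 in CS.
set A := \sum_(v | e u v) a v ^+ 2 in CS.
set B := \sum_(v | ~~ e u v && (v != u)) a v ^+ 2.
set C := \sum_(v | ~~ e u v && (v != u)) m ^+ 2.
set Cm := \sum_(v | ~~ e u v) m ^+ 2.
have H1 : 1 = A + a u ^+ 2 + B.
  rewrite -Hs (bigID (fun v => e u v)) /= -addrA; congr (_ + _).
  by rewrite (bigD1 u) /= ?irr.
have H2 : C <= B.
  apply: ler_sum => v _; have := Hm v isT; rewrite /= -/m => hv.
  by have hm0 := ltW hm; rewrite !expr2 ler_pM.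
have H3 : Cm = m ^+ 2 + C by rewrite /Cm (bigD1 u) /= ?irr.
have H4 : (n.+1)%:R * m ^+ 2 = d%:R * m ^+ 2 + Cm.
  have : \sum_(v : 'I_n.+1) m ^+ 2 = \sum_(v | e u v) m ^+ 2 + Cm by rewrite (bigID (fun v => e u v)).
  by rewrite !sumr_const card_ord cd !mulr_natl.
have Hmu : m ^+ 2 <= a u ^+ 2.
  by have hm0 := ltW hm; have hv := Hm u isT; rewrite !expr2 ler_pM.
have dge0 : 0 <= (d%:R : R) by [].
have K1 : mu ^+ 2 * m ^+ 2 <= mu ^+ 2 * a u ^+ 2 by apply: ler_wpM2l => //; exact: sqr_ge0.
have K2 : d%:R * m ^+ 2 <= d%:R * a u ^+ 2 by apply: ler_wpM2l.
have K3 : d%:R * C <= d%:R * B by apply: ler_wpM2l.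
have K4 : d%:R * ((n.+1)%:R * m ^+ 2) = d%:R * (d%:R * m ^+ 2) + d%:R * Cm by rewrite H4 mulrDr.
have K5 : (mu * a u) ^+ 2 = mu ^+ 2 * a u ^+ 2 by rewrite exprMn.
have key : m ^+ 2 * (mu ^+ 2 + d%:R * (n.+1)%:R - d%:R ^+ 2) <= d%:R.
  rewrite H3 in K4.
  have -> : (d%:R : R) = d%:R * 1 by rewrite mulr1.
  rewrite [in X in _ <= X]H1. nra.
rewrite -/d in HD.
rewrite -[m]ger0_norm ?(ltW hm) // -sqrtr_sqr ler_sqrt; last exact: divr_ge0 dge0 (ltW HD).
by rewrite ler_pdivlMr.
Qed.
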